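(* Let $\mathcal A$ be a finite uniform non-associative algebra and $\Rsh$ a projection operator from $\mathcal A$ to another non-associative algebra. If $\Rsh$ is superdistributive over $\diamond$ on the set of atoms of $\mathcal A$, then $\Rsh$ is superdistributive over $\diamond$ on $\mathcal A$.
   Context: A finite non-associative algebra is a tuple $(\mathcal A,\cup,\neg,\emptyset,\mathcal B,\diamond,\overline{\cdot},e)$ where $(\mathcal A,\cup,\neg,\emptyset,\mathcal B)$ is a finite Boolean algebra and for all $x,y,z$: $\overline{\overline x}=x$, $\overline{x\cup y}=\overline x\cup\overline y$, $\overline{x\diamond y}=\overline y\diamond\overline x$, $e\diamond x=x\diamond e=x$, $x\diamond(y\cup z)=(x\diamond y)\cup(x\diamond z)$, $(x\diamond y)\cap\overline z=\emptyset\iff(y\diamond z)\cap\overline x=\emptyset$. $r\subseteq r'$ means $r\cup r'=r'$; atoms are the basic relations. The algebra is uniform if $b\diamond b'\neq\emptyset$ for all atoms $b,b'$. A projection operator from $\mathcal A$ to $\mathcal A'$ is a map $\Rsh$ with $\Rsh(r\cup r')=\Rsh r\cup\Rsh r'$ and $\Rsh\overline r=\overline{\Rsh r}$. $\Rsh$ is superdistributive over $\diamond$ on a subset $X\subseteq\mathcal A$ if for all $r,r'\in X$ with $r\diamond r'\neq\emptyset$, $(\Rsh r)\diamond(\Rsh r')\subseteq\Rsh(r\diamond r')$. *)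

(* Defs.v *)
From HB Require Import structures.
From mathcomp Require Import all_boot all_order.
Set Implicit Arguments. Unset Strict Implicit. Unset Printing Implicit Defensive.
Import Order.TTheory.
Local Open Scope order_scope.

(* The underlying finite Boolean algebra (A, ∪, ¬, ∅, B) is a finite
   complemented distributive lattice with top and bottom:
   ∪ = `|`, ∩ = `&`, ¬ = ~`, ∅ = \bot, B = \top. *)

Definition bsub {d} {T : finCTBDistrLatticeType d} (r r' : T) : Prop :=
  r `|` r' = r'.

Definition is_atom {d} {T : finCTBDistrLatticeType d} (b : T) : Prop :=
  b <> \bot /\ forall x : T, bsub x b -> x = \bot \/ x = b.

Record naalg {d} (T : finCTBDistrLatticeType d) := NAAlg {
  comp : T -> T -> T;
  conv : T -> T;
  unit : T;
  conv_invol : forall x, conv (conv x) = x;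
  conv_join : forall x y, conv (x `|` y) = conv x `|` conv y;
  conv_comp : forall x y, conv (comp x y) = comp (conv y) (conv x);
  unit_l : forall x, comp unit x = x;
  unit_r : forall x, comp x unit = x;
  comp_joinr : forall x y z, comp x (y `|` z) = comp x y `|` comp x z;
  comp_triangle : forall x y z,
    (comp x y `&` conv z = \bot) <-> (comp y z `&` conv x = \bot)
}.

Definition uniform {d} {T : finCTBDistrLatticeType d} (A : naalg T) : Prop :=
  forall b b' : T, is_atom b -> is_atom b' -> comp A b b' <> \bot.

Definition projection {d d'} {T : finCTBDistrLatticeType d}
  {T' : finCTBDistrLatticeType d'} (A : naalg T) (A' : naalg T')
  (P : T -> T') : Prop :=
  (forall r r', P (r `|` r') = P r `|` P r') /\
  (forall r, P (conv A r) = conv A' (P r)).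

Definition superdistributive_on {d d'} {T : finCTBDistrLatticeType d}
  {T' : finCTBDistrLatticeType d'} (A : naalg T) (A' : naalg T')
  (P : T -> T') (X : T -> Prop) : Prop :=
  forall r r', X r -> X r' -> comp A r r' <> \bot ->
    bsub (comp A' (P r) (P r')) (P (comp A r r')).

(* Main.v *)
Require Import Defs.
From mathcomp Require Import all_boot all_order.
From mathcomp Require Import zify.
Import Order.TTheory Order.CBDistrLatticeTheory.
Local Open Scope order_scope.

Lemma comp_joinl {d} (T : finCTBDistrLatticeType d) (A : naalg T) x y z :
  Defs.comp A (x `|` y) z = Defs.comp A x z `|` Defs.comp A y z.
Proof.
rewrite -[Defs.comp A (x `|` y) z](conv_invol A) conv_comp conv_join comp_joinr conv_join.
by rewrite !conv_comp !conv_invol.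
Qed.

Lemma conv_bot {d} (T : finCTBDistrLatticeType d) (A : naalg T) :
  conv A \bot = \bot.
Proof.
apply: le_anti; rewrite le0x andbT.
have H : forall a b, a <= b -> conv A a <= conv A b.
  by move=> a b /join_idPr hab; apply/join_idPr; rewrite -conv_join hab.
by rewrite -[X in _ <= X](conv_invol A); apply: H; rewrite le0x.
Qed.

Lemma comp_x0 {d} (T : finCTBDistrLatticeType d) (A : naalg T) x :
  Defs.comp A x \bot = \bot.
Proof.
have := (comp_triangle A \bot (conv A (Defs.comp A x \bot)) x).
have := (comp_triangle A x \bot (conv A (Defs.comp A x \bot))).
rewrite conv_bot meetx0 conv_invol meetxx => [[_ h1]] [_ h2].
exact: h1 (h2 erefl).
Qed.

Lemma comp_0x {d} (T : finCTBDistrLatticeType d) (A : naalg T) x :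
  Defs.comp A \bot x = \bot.
Proof.
by rewrite -[Defs.comp A \bot x](conv_invol A) conv_comp conv_bot comp_x0 conv_bot.
Qed.

Definition sz {d} {T : finCTBDistrLatticeType d} (x : T) := #|[pred y : T | y <= x]|.

Lemma split_or {d} (T : finCTBDistrLatticeType d) (r : T) : r != \bot ->
  is_atom r \/ exists z w, [/\ z != \bot, w != \bot, r = z `|` w,
     (sz z < sz r)%N & (sz w < sz r)%N].
Proof.
move=> r0.
case: (boolP [exists x, (x `|` r == r) && (x != \bot) && (x != r)]).
  move/existsP=> [x /andP[/andP[/eqP/join_idPr hx x0] xr]].
  right; exists x, (r `\` x); split => //.
  - apply/eqP => h; move: xr; rewrite -(leBKU hx) h joinx0 eqxx //.
  - by rewrite leBKU.
  - apply: proper_card; apply/properP; split.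
      by apply/subsetP => y; rewrite !inE => hy; exact: le_trans hy hx.
    exists r; rewrite !inE ?lexx //; apply/negP => hr.
    by move: xr; rewrite (@le_anti _ _ x r) ?hx ?hr ?eqxx.
  - apply: proper_card; apply/properP; split.
      by apply/subsetP => y; rewrite !inE => hy; exact: le_trans hy (leBx _ _).
    exists r; rewrite !inE ?lexx //; apply/negP => hr.
    have e : r `\` x = r by apply: le_anti; rewrite hr leBx.
    move: x0; have <- : x `&` r = x by apply/meet_idPl.
    by rewrite -e diffKI eqxx.
move/existsPn => H; left; split; first exact/eqP.
move=> x hx; have := H x; rewrite /bsub in hx; rewrite hx eqxx /=.
by case: eqP => [->|_]; [left | case: eqP => [->|//]; right].
Qed.

Lemma main_ind d d' (T : finCTBDistrLatticeType d) (T' : finCTBDistrLatticeType d')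
  (A : naalg T) (A' : naalg T') (P : T -> T') :
  uniform A -> projection A A' P ->
  superdistributive_on A A' P is_atom ->
  forall n (r r' : T), (sz r + sz r' < n)%N -> r != \bot -> r' != \bot ->
    bsub (Defs.comp A' (P r) (P r')) (P (Defs.comp A r r')).
Proof.
move=> hu [hPj hPc] hat; elim=> [//|n IH] r r' hn r0 r'0.
case: (split_or _ _ r0) => [ar|[z [w [z0 w0 er hz hw]]]]; last subst r.
  case: (split_or _ _ r'0) => [ar'|[z [w [z0 w0 er hz hw]]]]; last subst r'.
    by apply: hat => //; apply: hu.
  rewrite !hPj comp_joinr comp_joinr hPj.
  have h1 := IH r z ltac:(lia) r0 z0.
  have h2 := IH r w ltac:(lia) r0 w0.
  by move: h1 h2; rewrite /bsub => /join_idPr h1 /join_idPr h2; apply/join_idPr; rewrite leU2.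
rewrite !hPj !comp_joinl hPj.
have h1 := IH z r' ltac:(lia) z0 r'0.
have h2 := IH w r' ltac:(lia) w0 r'0.
by move: h1 h2; rewrite /bsub => /join_idPr h1 /join_idPr h2; apply/join_idPr; rewrite leU2.
Qed.

Theorem proposition6p12 (d d' : Order.disp_t)
  (T : finCTBDistrLatticeType d) (T' : finCTBDistrLatticeType d')
  (A : naalg T) (A' : naalg T') (P : T -> T') :
  uniform A -> projection A A' P ->
  superdistributive_on A A' P is_atom ->
  superdistributive_on A A' P (fun _ => True).
Proof.
move=> hu hP hat r r' _ _ hc.
apply: (@main_ind _ _ _ _ _ _ _ hu hP hat (sz r + sz r').+1) => //.
  by apply/eqP => e; apply: hc; rewrite e comp_0x.
by apply/eqP => e; apply: hc; rewrite e comp_x0.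
Qed.
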